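(* Let $W$ be an entanglement witness on $\mathbb{C}^m\otimes\mathbb{C}^n$. Then $W^+$ is either an entanglement witness or positive semidefinite (a state, up to normalization). Specifically: (i) $W^+$ is an entanglement witness if and only if $W$ detects a real entangled state; (ii) $W^+$ is a PPT state if and only if $W$ detects no real entangled state and $W^\Gamma$ is either an NPT state or an entanglement witness detecting no real entangled state; (iii) $W^+$ is an NPT state if and only if $W$ detects no real entangled state and $W^\Gamma$ is an entanglement witness detecting at least one real entangled state. Moreover, if $W^+$ is an NPT state, then every real entangled state detected by $W^\Gamma$ is NPT.
   Context: An entanglement witness on $\mathbb{C}^m\otimes\mathbb{C}^n$ is a Hermitian matrix $W$ with $\mathrm{tr}(W\sigma)\ge0$ for all separable states $\sigma$ and $\mathrm{tr}(W\sigma)<0$ for at least one entangled state; $W$ detects $\rho$ if $\mathrm{tr}(W\rho)<0$. A real state is one whose density matrix has real entries. $W^+=\frac12(W+W^* )$ where $W^*$ is the entrywise complex conjugate; $M^\Gamma$ is the partial transpose with respect to the first subsystem. A (possibly unnormalized) positive semidefinite $\rho$ is PPT if $\rho^\Gamma\ge0$ and NPT otherwise. *)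

(* Defs.v *)
From HB Require Import structures.
From mathcomp Require Import all_boot all_order all_algebra.
From mathcomp Require Import complex mxtens.
From mathcomp Require Import reals.
Set Implicit Arguments. Unset Strict Implicit. Unset Printing Implicit Defensive.
Import Order.TTheory GRing.Theory Num.Theory.
Local Open Scope ring_scope.

Section QDefs.
Variable R : realType.
Local Notation C := (complex R).
Variables m n : nat.
Local Notation N := (m * n)%N.

Definition conjm (p q : nat) (A : 'M[C]_(p, q)) : 'M[C]_(p, q) := map_mx Num.conj A.

Definition adjm (p q : nat) (A : 'M[C]_(p, q)) : 'M[C]_(q, p) := (conjm A)^T.

Definition hermitian (p : nat) (A : 'M[C]_p) : Prop := adjm A = A.

Definition psd (p : nat) (A : 'M[C]_p) : Prop :=
  hermitian A /\ forall x : 'cV[C]_p, 0 <= (adjm x *m A *m x) 0 0.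

Definition plus_part (W : 'M[C]_N) : 'M[C]_N := 2^-1 *: (W + conjm W).

(* partial transpose with respect to the first subsystem C^m of C^m (x) C^n,
   with the Kronecker index convention of [tensmx] (index (i,k) |-> i*n+k) *)
Definition ptrans (A : 'M[C]_N) : 'M[C]_N :=
  \matrix_(p, q) A (mxtens_index ((mxtens_unindex q).1, (mxtens_unindex p).2))
                   (mxtens_index ((mxtens_unindex p).1, (mxtens_unindex q).2)).

Definition state (rho : 'M[C]_N) : Prop := psd rho /\ \tr rho = 1.

Definition separable (rho : 'M[C]_N) : Prop :=
  exists (K : nat) (A : 'I_K -> 'M[C]_m) (B : 'I_K -> 'M[C]_n),
    (forall k, psd (A k)) /\ (forall k, psd (B k)) /\
    rho = \sum_(k < K) (A k *t B k).

Definition entangled_state (rho : 'M[C]_N) : Prop := state rho /\ ~ separable rho.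

Definition real_mx (p q : nat) (A : 'M[C]_(p, q)) : Prop := forall i j, A i j \is Num.real.

Definition real_entangled_state (rho : 'M[C]_N) : Prop :=
  entangled_state rho /\ real_mx rho.

Definition detects (W rho : 'M[C]_N) : Prop := \tr (W *m rho) < 0.

Definition entanglement_witness (W : 'M[C]_N) : Prop :=
  [/\ hermitian W,
      (forall sigma, state sigma -> separable sigma -> 0 <= \tr (W *m sigma)) &
      exists rho, entangled_state rho /\ detects W rho].

Definition detects_real_entangled (W : 'M[C]_N) : Prop :=
  exists rho, real_entangled_state rho /\ detects W rho.

(* (possibly unnormalized) PPT / NPT states *)
Definition PPT (rho : 'M[C]_N) : Prop := psd rho /\ psd (ptrans rho).
Definition NPT (rho : 'M[C]_N) : Prop := psd rho /\ ~ psd (ptrans rho).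

End QDefs.

(* Main.v *)
Require Import Defs.
From HB Require Import structures.
From mathcomp Require Import all_boot all_order all_algebra.
From mathcomp Require Import complex mxtens.
From mathcomp Require Import reals.
From mathcomp Require sesquilinear spectral.
From mathcomp Require Import ring.
From Stdlib Require Classical_Prop.
Set Implicit Arguments. Unset Strict Implicit. Unset Printing Implicit Defensive.
Import Order.TTheory GRing.Theory Num.Theory.
Local Open Scope ring_scope.

Section A.
Variable R : realType.
Local Notation C := (complex R).

Lemma conjmE p q (A : 'M[C]_(p,q)) i j : conjm A i j = (A i j)^*.
Proof. by rewrite mxE. Qed.
Lemma adjmE p q (A : 'M[C]_(p,q)) i j : adjm A i j = (A j i)^*.
Proof. by rewrite !mxE. Qed.
Lemma conjmK p q (A : 'M[C]_(p,q)) : conjm (conjm A) = A.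
Proof. by apply/matrixP => i j; rewrite !mxE conjCK. Qed.
Lemma adjmK p q (A : 'M[C]_(p,q)) : adjm (adjm A) = A.
Proof. by apply/matrixP => i j; rewrite !mxE conjCK. Qed.
Lemma conjmM p q r (A : 'M[C]_(p,q)) (B : 'M[C]_(q,r)) :
  conjm (A *m B) = conjm A *m conjm B.
Proof. by rewrite /conjm map_mxM. Qed.
Lemma adjmM p q r (A : 'M[C]_(p,q)) (B : 'M[C]_(q,r)) :
  adjm (A *m B) = adjm B *m adjm A.
Proof. by rewrite /adjm conjmM trmx_mul. Qed.
Lemma conjmD p q (A B : 'M[C]_(p,q)) : conjm (A + B) = conjm A + conjm B.
Proof. by apply/matrixP => i j; rewrite !mxE rmorphD. Qed.
Lemma conjmZ p q c (A : 'M[C]_(p,q)) : conjm (c *: A) = c^* *: conjm A.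
Proof. by apply/matrixP => i j; rewrite !mxE rmorphM. Qed.
Lemma tr_conjm p (A : 'M[C]_p) : \tr (conjm A) = (\tr A)^*.
Proof. by rewrite /mxtrace rmorph_sum; apply: eq_bigr => i _; rewrite mxE. Qed.
Lemma tr_adjm p (A : 'M[C]_p) : \tr (adjm A) = (\tr A)^*.
Proof. by rewrite mxtrace_tr tr_conjm. Qed.

Lemma hermC p (A : 'M[C]_p) : Defs.hermitian A -> conjm A = A^T.
Proof.
move=> h; apply/matrixP => i j; move/matrixP: h => /(_ j i).
by rewrite !mxE => <-.
Qed.

Lemma tr_herm_real p (A B : 'M[C]_p) : Defs.hermitian A -> Defs.hermitian B ->
  (\tr (A *m B))^* = \tr (A *m B).
Proof.
move=> hA hB; rewrite -tr_conjm conjmM !hermC // -trmx_mul mxtrace_tr.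
exact: mxtrace_mulC.
Qed.

Lemma tr_herm_isreal p (A B : 'M[C]_p) : Defs.hermitian A -> Defs.hermitian B ->
  \tr (A *m B) \is Num.real.
Proof. by move=> hA hB; rewrite CrealE tr_herm_real. Qed.

Lemma psd_herm p (A : 'M[C]_p) : psd A -> Defs.hermitian A.
Proof. by case. Qed.

Lemma psd_quad p q (A : 'M[C]_p) (P : 'M[C]_(q, p)) i :
  psd A -> 0 <= (P *m A *m adjm P) i i.
Proof.
case=> _ /(_ (adjm (row i P))); rewrite adjmK.
congr (0 <= _); rewrite !mxE; apply: eq_bigr => k _; rewrite !mxE; congr (_ * _).
by apply: eq_bigr => l _; rewrite !mxE.
Qed.

Lemma psd_tr_ge0 p (A B : 'M[C]_p) : psd A -> psd B -> 0 <= \tr (A *m B).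
Proof.
move=> pA pB.
have nB : B \is spectral.normalmx.
  apply/spectral.normalmxP; have hB := psd_herm pB.
  by rewrite -map_trmx -/(conjm B) -/(adjm B) hB.
have /spectral.orthomx_spectralP eB := nB.
set P := spectral.spectralmx B in eB; set d := spectral.spectral_diag B in eB.
have uP : P \is spectral.unitarymx by exact: spectral.spectral_unitarymx.
have iP : invmx P = adjm P by rewrite spectral.invmx_unitary // -map_trmx.
have PP : P *m adjm P = 1%:M by move/spectral.unitarymxP: uP; rewrite -map_trmx.
have ED : diag_mx d = P *m B *m adjm P.
  by rewrite eB iP !mulmxA PP mul1mx -mulmxA PP mulmx1.
rewrite eB iP !mulmxA mxtrace_mulC !mulmxA.
rewrite mul_mx_diag /mxtrace; apply: sumr_ge0 => i _; rewrite mxE.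
apply: mulr_ge0; first exact: psd_quad.
have := psd_quad P i pB; rewrite -ED mxE eqxx mulr1n //.
Qed.

Lemma adjmZ p q c (A : 'M[C]_(p,q)) : adjm (c *: A) = c^* *: adjm A.
Proof. by apply/matrixP => i j; rewrite !mxE rmorphM. Qed.
Lemma adjmD p q (A B : 'M[C]_(p,q)) : adjm (A + B) = adjm A + adjm B.
Proof. by apply/matrixP => i j; rewrite !mxE rmorphD. Qed.

Lemma mx11_mul (U V : 'M[C]_1) : (U *m V) 0 0 = U 0 0 * V 0 0.
Proof. by rewrite mxE big_ord1. Qed.

Lemma tr11 (U : 'M[C]_1) : \tr U = U 0 0.
Proof. by rewrite /mxtrace big_ord1. Qed.

Lemma psd_of_states p (A : 'M[C]_p) : Defs.hermitian A ->
  (forall rho : 'M[C]_p, psd rho -> \tr rho = 1 -> 0 <= \tr (A *m rho)) -> psd A.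
Proof.
move=> hA H; split => // x.
have [->|x0] := eqVneq x 0; first by rewrite mulmx0 mxE.
set s := (adjm x *m x) 0 0.
have sE : s = \sum_i (x i 0)^* * x i 0 by rewrite /s mxE; apply: eq_bigr => i _; rewrite !mxE.
have s_ge0 : 0 <= s by rewrite sE; apply: sumr_ge0 => i _; rewrite mulrC mul_conjC_ge0.
have s_gt0 : 0 < s.
  rewrite lt_def s_ge0 andbT; apply: contra x0; rewrite sE => /eqP.
  move=> /psumr_eq0P h; apply/eqP/matrixP => i j; rewrite ord1 mxE.
  have /eqP := h (fun i _ => ltac:(by rewrite mulrC mul_conjC_ge0)) i isT.
  by rewrite mulrC mul_conjC_eq0 => /eqP.
set rho := s^-1 *: (x *m adjm x).
have sR : s^* = s by apply/CrealP; exact: gtr0_real.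
have hrho : Defs.hermitian rho.
  rewrite /Defs.hermitian /rho adjmZ adjmM adjmK fmorphV.
  by congr (_^-1 *: _).
have prho : psd rho.
  split => // y; rewrite /rho -scalemxAr -scalemxAl mxE.
  apply: mulr_ge0; first by rewrite invr_ge0.
  rewrite !mulmxA -[adjm y *m x *m adjm x *m y]mulmxA mx11_mul.
  have -> : adjm x *m y = adjm (adjm y *m x) by rewrite adjmM adjmK.
  by rewrite [adjm _ 0 0]adjmE mul_conjC_ge0.
have trrho : \tr rho = 1.
  by rewrite /rho mxtraceZ mxtrace_mulC tr11 mulVf // gt_eqF.
have := H rho prho trrho.
rewrite /rho -scalemxAr mxtraceZ mulmxA mxtrace_mulC mulmxA tr11.
by rewrite pmulr_rge0 // invr_gt0.
Qed.

Lemma psd0 p : psd (0 : 'M[C]_p).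
Proof.
split; first by apply/matrixP => i j; rewrite !mxE conjC0.
by move=> x; rewrite mulmx0 mul0mx mxE.
Qed.

Lemma psdD p (A B : 'M[C]_p) : psd A -> psd B -> psd (A + B).
Proof.
move=> [hA qA] [hB qB]; split; first by rewrite /Defs.hermitian adjmD hA hB.
by move=> x; rewrite mulmxDr mulmxDl mxE addr_ge0.
Qed.

Lemma psdZ p c (A : 'M[C]_p) : 0 <= c -> psd A -> psd (c *: A).
Proof.
move=> c0 [hA qA]; split.
  by rewrite /Defs.hermitian adjmZ hA; congr (_ *: _); apply/CrealP; exact: ger0_real.
by move=> x; rewrite -scalemxAr -scalemxAl mxE mulr_ge0.
Qed.

Lemma conjm_adjm p q (A : 'M[C]_(p,q)) : conjm (adjm A) = adjm (conjm A).
Proof. by apply/matrixP => i j; rewrite !mxE. Qed.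

Lemma psd_conj p (A : 'M[C]_p) : psd A -> psd (conjm A).
Proof.
move=> [hA qA]; split; first by rewrite /Defs.hermitian -conjm_adjm hA.
move=> x; have := qA (conjm x).
rewrite -conjC_ge0 -conjmE !conjmM conjm_adjm !conjmK.
by [].
Qed.

Lemma psd_tr p (A : 'M[C]_p) : psd A -> psd A^T.
Proof. by move=> pA; rewrite -(hermC (psd_herm pA)); apply: psd_conj. Qed.

Lemma psd_congr p q (A : 'M[C]_p) (X : 'M[C]_(p, q)) : psd A -> psd (adjm X *m A *m X).
Proof.
move=> pA; have [hA qA] := pA; split.
  by rewrite /Defs.hermitian !adjmM adjmK hA mulmxA.
move=> y; have := psd_quad (adjm (X *m y)) 0 pA.
by rewrite adjmK adjmM !mulmxA.
Qed.

Lemma tr_conjmM p (A B : 'M[C]_p) : \tr (conjm A *m conjm B) = (\tr (A *m B))^*.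
Proof. by rewrite -conjmM tr_conjm. Qed.

Lemma conjm_sum p q I (r : seq I) (P : pred I) (F : I -> 'M[C]_(p,q)) :
  conjm (\sum_(i <- r | P i) F i) = \sum_(i <- r | P i) conjm (F i).
Proof.
apply/matrixP => a b; rewrite mxE !summxE rmorph_sum.
by apply: eq_bigr => i _; rewrite mxE.
Qed.
End A.

Section B.
Variable R : realType.
Local Notation C := (complex R).
Variables m n : nat.
Local Notation N := (m * n)%N.
Local Notation idx := (@mxtens_index m n).

Lemma sumN (F : 'I_N -> C) : \sum_p F p = \sum_(i < m) \sum_(k < n) F (idx (i, k)).
Proof.
rewrite (reindex idx) /=; last first.
  by apply: onW_bij; exact: (Bijective (@mxtens_indexK m n) (@mxtens_unindexK m n)).
by rewrite pair_big /=; apply: eq_bigr => -[].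
Qed.

Lemma ptransE (A : 'M[C]_N) i k j l :
  ptrans A (idx (i, k)) (idx (j, l)) = A (idx (j, k)) (idx (i, l)).
Proof. by rewrite mxE !mxtens_indexK. Qed.

Lemma ptransK (A : 'M[C]_N) : ptrans (ptrans A) = A.
Proof.
apply/matrixP => p q; case: (mxtens_indexP p) => i k; case: (mxtens_indexP q) => j l.
by rewrite !ptransE.
Qed.

Lemma ptrans_tens (A : 'M[C]_m) (B : 'M[C]_n) : ptrans (A *t B) = A^T *t B.
Proof.
apply/matrixP => p q; case: (mxtens_indexP p) => i k; case: (mxtens_indexP q) => j l.
by rewrite ptransE !tensmxE mxE.
Qed.

Lemma conjm_tens (A : 'M[C]_m) (B : 'M[C]_n) : conjm (A *t B) = conjm A *t conjm B.
Proof.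
apply/matrixP => p q; case: (mxtens_indexP p) => i k; case: (mxtens_indexP q) => j l.
by rewrite conjmE !tensmxE !conjmE rmorphM.
Qed.

Lemma ptrans_sum I (r : seq I) (P : pred I) (F : I -> 'M[C]_N) :
  ptrans (\sum_(i <- r | P i) F i) = \sum_(i <- r | P i) ptrans (F i).
Proof.
apply/matrixP => a b; rewrite mxE !summxE.
by apply: eq_bigr => i _; rewrite mxE.
Qed.

Lemma ptransD (A B : 'M[C]_N) : ptrans (A + B) = ptrans A + ptrans B.
Proof. by apply/matrixP => a b; rewrite !mxE. Qed.
Lemma ptransZ c (A : 'M[C]_N) : ptrans (c *: A) = c *: ptrans A.
Proof. by apply/matrixP => a b; rewrite !mxE. Qed.
Lemma ptrans_conjm (A : 'M[C]_N) : ptrans (conjm A) = conjm (ptrans A).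
Proof. by apply/matrixP => a b; rewrite !mxE. Qed.
Lemma ptrans_herm (A : 'M[C]_N) : Defs.hermitian A -> Defs.hermitian (ptrans A).
Proof.
move=> hA; rewrite /Defs.hermitian; apply/matrixP => p q.
case: (mxtens_indexP p) => i k; case: (mxtens_indexP q) => j l.
move: hA; rewrite /Defs.hermitian => /matrixP /(_ (idx (j,k)) (idx (i,l))).
by rewrite adjmE !ptransE adjmE => <-; rewrite ptransE.
Qed.

Lemma trE (X Y : 'M[C]_N) : \tr (X *m Y) =
  \sum_i \sum_k \sum_j \sum_l X (idx (i,k)) (idx (j,l)) * Y (idx (j,l)) (idx (i,k)).
Proof.
rewrite /mxtrace sumN; apply: eq_bigr => i _; apply: eq_bigr => k _.
by rewrite mxE sumN.
Qed.

Lemma tr_ptrans (A B : 'M[C]_N) : \tr (ptrans A *m B) = \tr (A *m ptrans B).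
Proof.
rewrite !trE.
under eq_bigr => i _ do rewrite exchange_big.
under [RHS]eq_bigr => i _ do rewrite exchange_big.
rewrite exchange_big; apply: eq_bigr => j _; apply: eq_bigr => i _.
apply: eq_bigr => k _; apply: eq_bigr => l _.
by rewrite !ptransE.
Qed.

Lemma adjm_tens (A : 'M[C]_m) (B : 'M[C]_n) : adjm (A *t B) = adjm A *t adjm B.
Proof.
apply/matrixP => p q; case: (mxtens_indexP p) => i k; case: (mxtens_indexP q) => j l.
by rewrite adjmE !tensmxE !adjmE rmorphM.
Qed.

Lemma psd_tens (A : 'M[C]_m) (B : 'M[C]_n) : psd A -> psd B -> psd (A *t B).
Proof.
move=> pA pB; have hA := psd_herm pA; have hB := psd_herm pB.
split; first by rewrite /Defs.hermitian adjm_tens hA hB.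
move=> x; set X : 'M[C]_(m, n) := \matrix_(i, k) x (idx (i, k)) 0.
have L : (adjm x *m (A *t B) *m x) 0 0 = \sum_j \sum_l \sum_i \sum_k
    (x (idx (i,k)) 0)^* * A i j * B k l * x (idx (j,l)) 0.
  rewrite mxE sumN; apply: eq_bigr => j _; apply: eq_bigr => l _.
  rewrite mxE sumN big_distrl /=; apply: eq_bigr => i _; rewrite big_distrl.
  by apply: eq_bigr => k _; rewrite tensmxE adjmE mulrA.
have Rr : \tr (adjm X *m A *m X *m B^T) = \sum_k \sum_l \sum_j \sum_i
    (x (idx (i,k)) 0)^* * A i j * B k l * x (idx (j,l)) 0.
  rewrite /mxtrace; apply: eq_bigr => k _; rewrite mxE; apply: eq_bigr => l _.
  rewrite !mxE big_distrl; apply: eq_bigr => j _; rewrite mxE !big_distrl.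
by apply: eq_bigr => i _; rewrite !mxE; exact: mulrAC.
have -> : (adjm x *m (A *t B) *m x) 0 0 = \tr (adjm X *m A *m X *m B^T).
  rewrite L Rr.
  under eq_bigr => j _ do under eq_bigr => l _ do rewrite exchange_big.
  under eq_bigr => j _ do rewrite exchange_big.
  rewrite exchange_big; apply: eq_bigr => k _; exact: exchange_big.
by apply: psd_tr_ge0; [apply: psd_congr | apply: psd_tr].
Qed.

Lemma psd_sep (rho : 'M[C]_N) : separable rho -> psd rho.
Proof.
move=> [K [A [B [pA [pB ->]]]]].
apply: (big_ind (@psd R N)); [exact: psd0 | exact: psdD | move=> k _; exact: psd_tens].
Qed.

Lemma sep_conj (rho : 'M[C]_N) : separable rho -> separable (conjm rho).
Proof.
move=> [K [A [B [pA [pB ->]]]]].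
exists K, (fun k => conjm (A k)), (fun k => conjm (B k)); split; [|split].
- by move=> k; apply: psd_conj.
- by move=> k; apply: psd_conj.
- by rewrite conjm_sum; apply: eq_bigr => k _; rewrite conjm_tens.
Qed.

Lemma sep_ptrans (rho : 'M[C]_N) : separable rho -> separable (ptrans rho).
Proof.
move=> [K [A [B [pA [pB ->]]]]].
exists K, (fun k => (A k)^T), B; split; [|split] => //.
- by move=> k; apply: psd_tr.
- by rewrite ptrans_sum; apply: eq_bigr => k _; rewrite ptrans_tens.
Qed.
End B.

Section C.
Variable R : realType.
Local Notation C := (complex R).
Variables m n : nat.
Local Notation N := (m * n)%N.
Local Notation idx := (@mxtens_index m n).

Definition nonneg_sep (X : 'M[C]_N) := Defs.hermitian X /\
  forall sigma, state sigma -> separable sigma -> 0 <= \tr (X *m sigma).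

Lemma conj_half : (2^-1 : C)^* = 2^-1.
Proof. by apply/CrealP; apply: ger0_real; rewrite invr_ge0 ler0n. Qed.

Lemma half_ge0 : 0 <= (2^-1 : C).
Proof. by rewrite invr_ge0 ler0n. Qed.

Lemma half_double (t : C) : 2^-1 * (t + t) = t.
Proof. have h2 : (2 : C) != 0 by rewrite pnatr_eq0. by field. Qed.

Lemma state_conj (s : 'M[C]_N) : state s -> state (conjm s).
Proof. by move=> [ps ts]; split; [apply: psd_conj | rewrite tr_conjm ts conjC1]. Qed.

Lemma tr_ptrans0 (A : 'M[C]_N) : \tr (ptrans A) = \tr A.
Proof.
rewrite /mxtrace !sumN; apply: eq_bigr => i _; apply: eq_bigr => k _.
by rewrite ptransE.
Qed.

Lemma state_ptrans (s : 'M[C]_N) : state s -> separable s -> state (ptrans s).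
Proof.
move=> [ps ts] ss; split; last by rewrite tr_ptrans0.
by apply: psd_sep; apply: sep_ptrans.
Qed.

Lemma EW_nonneg (X : 'M[C]_N) : entanglement_witness X -> nonneg_sep X.
Proof. by case. Qed.

Lemma plus_herm (X : 'M[C]_N) : Defs.hermitian X -> Defs.hermitian (plus_part X).
Proof.
move=> hX; rewrite /Defs.hermitian /plus_part adjmZ adjmD conj_half.
by rewrite -conjm_adjm hX.
Qed.

Lemma tr_plus (X Y : 'M[C]_N) :
  \tr (plus_part X *m Y) = 2^-1 * (\tr (X *m Y) + (\tr (X *m conjm Y))^*).
Proof.
by rewrite /plus_part -scalemxAl mxtraceZ mulmxDl mxtraceD -tr_conjmM conjmK.
Qed.

Lemma nonneg_plus (X : 'M[C]_N) : nonneg_sep X -> nonneg_sep (plus_part X).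
Proof.
move=> [hX nX]; split; first exact: plus_herm.
move=> s ss sep; rewrite tr_plus; apply: mulr_ge0 => //; first exact: half_ge0.
apply: addr_ge0; first exact: nX.
by rewrite conjC_ge0; apply: nX; [apply: state_conj | apply: sep_conj].
Qed.

Lemma nonneg_ptrans (X : 'M[C]_N) : nonneg_sep X -> nonneg_sep (ptrans X).
Proof.
move=> [hX nX]; split; first exact: ptrans_herm.
move=> s ss sep; rewrite tr_ptrans; apply: nX; first exact: state_ptrans.
exact: sep_ptrans.
Qed.

Lemma dichotomy (X : 'M[C]_N) : nonneg_sep X -> entanglement_witness X \/ psd X.
Proof.
move=> [hX nX].
case: (Classical_Prop.classic (exists rho, entangled_state rho /\ detects X rho)) => [h|h].
  by left; split.
right; apply: psd_of_states => // rho prho trho.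
case: (Classical_Prop.classic (separable rho)) => [sep|nsep]; first exact: nX.
have re : \tr (X *m rho) \is Num.real by apply: tr_herm_isreal => //; case: prho.
rewrite real_leNgt ?real0 //; apply/negP => lt.
by apply: h; exists rho; split => //; split.
Qed.

Lemma EW_not_psd (X : 'M[C]_N) : entanglement_witness X -> ~ psd X.
Proof.
move=> [_ _ [rho [[[prho _] _] det]]] pX.
have := psd_tr_ge0 pX prho; rewrite /detects in det.
by move=> /le_gtF; rewrite det.
Qed.

Lemma psd_plus (X : 'M[C]_N) : psd X -> psd (plus_part X).
Proof. by move=> pX; apply: psdZ; [exact: half_ge0 | apply: psdD => //; apply: psd_conj]. Qed.

Lemma real_conj (rho : 'M[C]_N) : real_mx rho -> conjm rho = rho.
Proof. by move=> r; apply/matrixP => i j; rewrite mxE; apply/CrealP. Qed.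

Lemma conj_real (rho : 'M[C]_N) : conjm rho = rho -> real_mx rho.
Proof. by move=> /matrixP e i j; apply/CrealP; rewrite -[RHS]e mxE. Qed.

Lemma conjm_plus (X : 'M[C]_N) : conjm (plus_part X) = plus_part X.
Proof. by rewrite /plus_part conjmZ conj_half conjmD conjmK addrC. Qed.

Lemma tr_plus_real (X rho : 'M[C]_N) : Defs.hermitian X -> Defs.hermitian rho ->
  conjm rho = rho -> \tr (plus_part X *m rho) = \tr (X *m rho).
Proof. by move=> hX hr cr; rewrite tr_plus cr tr_herm_real // half_double. Qed.

Lemma tr_plus_re (Y rho : 'M[C]_N) : Defs.hermitian Y -> Defs.hermitian rho ->
  conjm Y = Y -> \tr (Y *m plus_part rho) = \tr (Y *m rho).
Proof.
move=> hY hr cY; rewrite mxtrace_mulC tr_plus cY tr_herm_real // half_double.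
exact: mxtrace_mulC.
Qed.

Lemma state_plus (rho : 'M[C]_N) : state rho -> state (plus_part rho).
Proof.
move=> [pr tr]; split; first exact: psd_plus.
by rewrite /plus_part mxtraceZ mxtraceD tr_conjm tr conjC1 half_double.
Qed.

Lemma Ipl (W : 'M[C]_N) : entanglement_witness W ->
  (entanglement_witness (plus_part W) <-> detects_real_entangled W).
Proof.
move=> ew; have [hW nW] := EW_nonneg ew; have [hP nP] := nonneg_plus (EW_nonneg ew).
split.
- move=> [_ _ [rho [[sr nsr] det]]].
  have hr : Defs.hermitian rho by case: sr => -[].
  have sr' := state_plus sr.
  have hr' : Defs.hermitian (plus_part rho) by case: sr' => -[].
  have eq : \tr (W *m plus_part rho) = \tr (plus_part W *m rho).
    rewrite -tr_plus_real ?conjm_plus //; apply: tr_plus_re => //.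
    exact: conjm_plus.
  exists (plus_part rho); split; last by rewrite /detects eq.
  split; last by apply: conj_real; exact: conjm_plus.
  split => // sep; have := nW _ sr' sep.
  by move=> /le_gtF; rewrite eq det.
- move=> [rho [[[sr nsr] rr] det]]; split => //.
  exists rho; split => //; rewrite /detects tr_plus_real //.
  + by case: sr => -[].
  + exact: real_conj.
Qed.
End C.

Unset Implicit Arguments.
Theorem corollary1 (R : realType) (m n : nat) (W : 'M[complex R]_(m * n)) :
  entanglement_witness W ->
  [/\ entanglement_witness (plus_part W) \/ psd (plus_part W),
      (entanglement_witness (plus_part W) <-> detects_real_entangled W),
      (PPT (plus_part W) <->
         ~ detects_real_entangled W /\
         (NPT (ptrans W) \/
          (entanglement_witness (ptrans W) /\ ~ detects_real_entangled (ptrans W)))),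
      (NPT (plus_part W) <->
         [/\ ~ detects_real_entangled W, entanglement_witness (ptrans W)
           & detects_real_entangled (ptrans W)]) &
      (NPT (plus_part W) ->
         forall rho, real_entangled_state rho -> detects (ptrans W) rho -> NPT rho)].
Proof.
move=> ew.
have nW := EW_nonneg ew.
have nP := nonneg_plus nW.
have nG := nonneg_ptrans nW.
have IW := Ipl ew.
have psdP : psd (plus_part W) <-> ~ detects_real_entangled W.
  split; first by move=> p d; exact: (EW_not_psd (IW.2 d)).
  by move=> nd; case: (dichotomy nP) => // e; case: nd; apply IW.1.
have PG : ptrans (plus_part W) = plus_part (ptrans W).
  by rewrite /plus_part ptransZ ptransD ptrans_conjm.
have NPTG : NPT (ptrans W) <-> psd (ptrans W).
  split; [by case | move=> p; split => //; rewrite ptransK; exact: EW_not_psd].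
have psdPG : psd (plus_part (ptrans W)) <-> psd (ptrans W) \/
   (entanglement_witness (ptrans W) /\ ~ detects_real_entangled (ptrans W)).
  split.
    move=> p; case: (dichotomy nG) => [eG|pG]; last by left.
    by right; split => // d; exact: (EW_not_psd ((Ipl eG).2 d) p).
  case=> [pG|[eG nd]]; first exact: psd_plus.
  by case: (dichotomy (nonneg_plus nG)) => // e; case: nd; apply (Ipl eG).1.
have DG := dichotomy nG.
have EG := @EW_not_psd R m n (ptrans W).
have cl := Classical_Prop.classic (detects_real_entangled (ptrans W)).
split.
- exact: dichotomy nP.
- exact: IW.
- rewrite /PPT PG; split.
    move=> [p q]; split; first exact: psdP.1 p.
    by case: (psdPG.1 q) => [pG|h]; [left; exact: NPTG.2 pG | right].
  move=> [nd h]; split; first exact: psdP.2 nd.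
  by apply: psdPG.2; case: h => [npt|h]; [left; exact: NPTG.1 npt | right].
- rewrite /NPT PG; split.
    move=> [p nq]; have nd := psdP.1 p.
    have eG : entanglement_witness (ptrans W).
      case: DG => [eG|pG]; first exact: eG.
      exfalso; apply: nq; apply: (proj2 psdPG); left; exact: pG.
    case: cl => [d|nd']; first by split.
    by case: nq; apply: psdPG.2; right.
  move=> [nd eG d]; split; first exact: psdP.2 nd.
  move=> q; case: (psdPG.1 q) => [pG|[_ nd']]; [exact: EG eG pG | exact: nd' d].
- move=> [pWp _] rho [[sr nsr] rr] det; split; first by case: sr.
  move=> pr; have := psd_tr_ge0 pWp pr.
  rewrite tr_plus_real; first last.
  + by rewrite -ptrans_conjm real_conj.
  + exact: psd_herm.
  + by case: nW.
  by rewrite -tr_ptrans => /le_gtF; rewrite det.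
Qed.
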